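(* Assume $\delta\in(0,1]$. Consider a critical sequence of symmetric action profiles $(p,q)$ with $p>0$, and let $\omega(n)\to\infty$. Then for every firm $i$, $$\mathbb P\big[|I_i(\mathbf p,\mathbf q)|>\omega(n)\big]\to0\quad\text{as }n\to\infty.$$
   Context: Model (for each number of firms $n\ge 2$). There are $n$ firms $1,\dots,n$; firm $i$ can discover a single idea, also labelled $i$. A parameter $\delta\in[0,1]$ is fixed. All firms use the action $(p,q)\in[0,1)\times[0,1]$ (depending on $n$). Idea $i$ is discovered independently with probability $p$; $I$ is the random set of discovered ideas. The interaction rate is $\iota(q,q)=q^2$. For each ordered pair $i\neq j$, independently, $i$ learns directly from $j$ with probability $\iota(q,q)$, and conditional on this, independently with probability $\delta$, $i$ also learns indirectly through $j$. The indirect-learning network has an edge $j\to i$ whenever $i$ learns indirectly through $j$. $I_i(\mathbf p,\mathbf q)=\{j\in I\setminus\{i\}:$ some firm $m$, with $m=i$ or with a directed path from $m$ to $i$ in the indirect-learning network, learns directly from $j\}$. The sequence (indexed by $n\to\infty$) is critical if $\lim_n\delta\iota(q,q)n=1$. *)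

(* Defs.v *)
From mathcomp Require Import all_boot.
From Stdlib Require Import Reals ClassicalDescription.
Set Implicit Arguments. Unset Strict Implicit. Unset Printing Implicit Defensive.

Definition irate (q1 q2 : R) : R := Rmult q1 q2.

Definition bern (a : R) (b : bool) : R := if b then a else Rminus R1 a.

(* A sample point of the model with n firms:
   - disc i        : idea i is discovered (prob p)
   - dir (i,j)     : i learns directly from j (prob iota(q,q))
   - ind (i,j)     : auxiliary coin (prob delta); i learns indirectly through j
                     iff dir (i,j) && ind (i,j).
   Only pairs i <> j are used; diagonal coins are dummy independent coins. *)
Definition Omega (n : nat) : finType :=
  ({ffun 'I_n -> bool} * {ffun 'I_n * 'I_n -> bool} * {ffun 'I_n * 'I_n -> bool})%type.

Definition disc {n} (w : Omega n) (i : 'I_n) : bool := w.1.1 i.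
Definition learns_direct {n} (w : Omega n) (i j : 'I_n) : bool :=
  (i != j) && w.1.2 (i, j).
Definition learns_indirect {n} (w : Omega n) (i j : 'I_n) : bool :=
  learns_direct w i j && w.2 (i, j).

Definition ind_edge {n} (w : Omega n) : rel 'I_n :=
  fun j i => learns_indirect w i j.

Definition Iset {n} (w : Omega n) (i : 'I_n) : {set 'I_n} :=
  [set j | disc w j && (j != i) &&
           [exists m, connect (ind_edge w) m i && learns_direct w m j]].

Definition weight (n : nat) (p q delta : R) (w : Omega n) : R :=
  Rmult (Rmult (\big[Rmult/R1]_(i : 'I_n) bern p (w.1.1 i))
               (\big[Rmult/R1]_(ij : 'I_n * 'I_n) bern (irate q q) (w.1.2 ij)))
        (\big[Rmult/R1]_(ij : 'I_n * 'I_n) bern delta (w.2 ij)).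

Definition Prob (n : nat) (p q delta : R) (E : Omega n -> Prop) : R :=
  \big[Rplus/R0]_(w : Omega n)
     (if excluded_middle_informative (E w) then weight p q delta w else R0).

(* Main.v *)
Require Import Defs.
From mathcomp Require Import all_boot.
From Stdlib Require Import Reals.
From HB Require Import structures.
From Stdlib Require Import Lra Lia Psatz ClassicalDescription.
Set Implicit Arguments. Unset Strict Implicit. Unset Printing Implicit Defensive.
Local Open Scope R_scope.

Lemma RplusA' : associative Rplus. Proof. by move=> x y z; rewrite Rplus_assoc. Qed.
Lemma RmultA' : associative Rmult. Proof. by move=> x y z; rewrite Rmult_assoc. Qed.
HB.instance Definition _ := Monoid.isComLaw.Build R R0 Rplus RplusA' Rplus_comm Rplus_0_l.
HB.instance Definition _ := Monoid.isComLaw.Build R R1 Rmult RmultA' Rmult_comm Rmult_1_l.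
HB.instance Definition _ := Monoid.isMulLaw.Build R R0 Rmult Rmult_0_l Rmult_0_r.
HB.instance Definition _ := Monoid.isAddLaw.Build R Rmult Rplus Rmult_plus_distr_r Rmult_plus_distr_l.


Lemma sumR_le (I : Type) (s : seq I) (P : pred I) (F G : I -> R) :
  (forall i, P i -> F i <= G i) ->
  \big[Rplus/0]_(i <- s | P i) F i <= \big[Rplus/0]_(i <- s | P i) G i.
Proof.
move=> H; elim/big_ind2: _ => //; first lra.
move=> *; lra.
Qed.

Lemma sumR_ge0 (I : Type) (s : seq I) (P : pred I) (F : I -> R) :
  (forall i, P i -> 0 <= F i) -> 0 <= \big[Rplus/0]_(i <- s | P i) F i.
Proof. move=> H; elim/big_ind: _ => //; [lra| move=> *; lra]. Qed.

Lemma prodR_ge0 (I : Type) (s : seq I) (P : pred I) (F : I -> R) :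
  (forall i, P i -> 0 <= F i) -> 0 <= \big[Rmult/1]_(i <- s | P i) F i.
Proof. move=> H; elim/big_ind: _ => //; [lra| move=> *; nra]. Qed.

Lemma prodR_le1 (I : Type) (s : seq I) (P : pred I) (F : I -> R) :
  (forall i, P i -> 0 <= F i <= 1) -> 0 <= \big[Rmult/1]_(i <- s | P i) F i <= 1.
Proof. move=> H; elim/big_ind: _ => //; [lra| move=> *; nra]. Qed.

Lemma prodR_le (I : Type) (s : seq I) (P : pred I) (F G : I -> R) :
  (forall i, P i -> 0 <= F i <= G i) ->
  \big[Rmult/1]_(i <- s | P i) F i <= \big[Rmult/1]_(i <- s | P i) G i.
Proof.
move=> H.
have : 0 <= \big[Rmult/1]_(i <- s | P i) F i <= \big[Rmult/1]_(i <- s | P i) G i.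
  elim/big_ind2: _ => //; first lra.
  move=> x1 x2 y1 y2 h1 h2; nra.
by case.
Qed.

Section Prod.
Variables (K : finType) (a : K -> R).
Hypothesis a01 : forall k, 0 <= a k <= 1.
Notation Om := {ffun K -> bool}.

Definition Wt (w : Om) : R := \big[Rmult/1]_k bern (a k) (w k).
Definition Ex (f : Om -> R) : R := \big[Rplus/0]_w (Wt w * f w).

Lemma bern_ge0 k b : 0 <= bern (a k) b.
Proof. have := a01 k; case: b => /=; rewrite /Rminus; lra. Qed.

Lemma Wt_ge0 w : 0 <= Wt w.
Proof. by apply: prodR_ge0 => k _; apply: bern_ge0. Qed.

Lemma Wt_sum : \big[Rplus/0]_w Wt w = 1.
Proof.
rewrite /Wt -(bigA_distr_bigA (fun k b => bern (a k) b)).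
rewrite big1 // => k _.
rewrite (bigD1 true) //= (bigD1 false) //= big1; last by case.
rewrite /Rminus; lra.
Qed.

Lemma Ex_const c : Ex (fun _ => c) = c.
Proof. by rewrite /Ex -big_distrl /= Wt_sum Rmult_1_l. Qed.

Lemma Ex_add f g : Ex (fun w => f w + g w) = Ex f + Ex g.
Proof. rewrite /Ex -big_split /=; apply: eq_bigr => w _; ring. Qed.

Lemma Ex_scale c f : Ex (fun w => c * f w) = c * Ex f.
Proof. rewrite /Ex big_distrr /=; apply: eq_bigr => w _; ring. Qed.

Lemma Ex_ext f g : (forall w, f w = g w) -> Ex f = Ex g.
Proof. by move=> H; apply: eq_bigr => w _; rewrite H. Qed.

Lemma Ex_le f g : (forall w, f w <= g w) -> Ex f <= Ex g.
Proof.
move=> H; apply: sumR_le => w _; have := Wt_ge0 w; have := H w; nra.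
Qed.

Lemma Ex_ge0 f : (forall w, 0 <= f w) -> 0 <= Ex f.
Proof. move=> H; rewrite -(Ex_const 0); exact: Ex_le. Qed.

Definition upd (w : Om) (k : K) (b : bool) : Om :=
  [ffun j => if j == k then b else w j].

Lemma upd_at w k b : upd w k b k = b.
Proof. by rewrite ffunE eqxx. Qed.
Lemma upd_ne w k b j : j != k -> upd w k b j = w j.
Proof. by rewrite ffunE => /negbTE ->. Qed.
Lemma upd_upd w k b b' : upd (upd w k b) k b' = upd w k b'.
Proof. by apply/ffunP => j; rewrite !ffunE; case: eqP. Qed.
Lemma upd_id w k : upd w k (w k) = w.
Proof. by apply/ffunP => j; rewrite !ffunE; case: eqP => // ->. Qed.

Definition Ik (k : K) (f : Om -> R) (w : Om) : R :=
  a k * f (upd w k true) + (1 - a k) * f (upd w k false).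

Definition Wtk (k : K) (w : Om) := \big[Rmult/1]_(j | j != k) bern (a j) (w j).

Lemma Wt_split k w : Wt w = bern (a k) (w k) * Wtk k w.
Proof. by rewrite /Wt (bigD1 k). Qed.

Lemma Wtk_upd k w b : Wtk k (upd w k b) = Wtk k w.
Proof. by apply: eq_bigr => j jk; rewrite upd_ne. Qed.

Lemma sum_flip k (F : Om -> R) :
  \big[Rplus/0]_w F w =
  \big[Rplus/0]_(w : Om | w k) (F w + F (upd w k (~~ w k))).
Proof.
rewrite (bigID (fun w : Om => w k)) /= big_split /=; congr (_ + _).
have inj : injective (fun w => upd w k (~~ w k)).
  move=> w1 w2 /= E.
  have E1 : w1 k = w2 k.
    by move: (congr1 (fun w : Om => w k) E); rewrite !upd_at => /negb_inj.
  have e1 := upd_upd w1 k (~~ w1 k) (w1 k); rewrite upd_id E upd_upd E1 upd_id in e1.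
  by rewrite e1.
rewrite (reindex_inj inj) /=; apply: eq_bigl => w; by rewrite upd_at negbK.
Qed.

Lemma Ex_Ik k f : Ex (Ik k f) = Ex f.
Proof.
rewrite /Ex (sum_flip k (fun w => Wt w * Ik k f w)) (sum_flip k (fun w => Wt w * f w)).
apply: eq_bigr => w wk.
rewrite !(Wt_split k) !Wtk_upd /Ik !upd_upd upd_at /= wk /=.
have -> : upd w k true = w by rewrite -[in RHS](upd_id w k) wk.
ring.
Qed.

Definition Il (l : seq K) (f : Om -> R) : Om -> R := foldr Ik f l.

Lemma Ex_Il l f : Ex (Il l f) = Ex f.
Proof. elim: l => //= k l IH; by rewrite Ex_Ik. Qed.

Lemma Il_indep l f (w w' : Om) : (forall j, j \notin l -> w j = w' j) -> Il l f w = Il l f w'.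
Proof.
elim: l w w' => [|k l IH] w w' H /=.
  by congr f; apply/ffunP => j; apply: H.
rewrite /Ik; congr (_ * _ + _ * _); apply: IH => j jl; rewrite !ffunE;
  case: eqP => // /eqP jk; apply: H; by rewrite in_cons negb_or jk.

Qed.

Lemma Ex_eval f w0 : Ex f = Il (index_enum K) f w0.
Proof.
rewrite -(Ex_Il (index_enum K)) /Ex.
rewrite (eq_bigr (fun w => Wt w * Il (index_enum K) f w0)); last first.
  move=> w _; congr (_ * _); apply: Il_indep => j; by rewrite mem_index_enum.
by rewrite -big_distrl /= Wt_sum Rmult_1_l.
Qed.

Definition leW (w w' : Om) := forall k, w k -> w' k.
Definition dec (f : Om -> R) := forall w w', leW w w' -> f w' <= f w.

Lemma upd_leW w w' k b : leW w w' -> leW (upd w k b) (upd w' k b).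
Proof. move=> H j; rewrite !ffunE; case: (j == k) => //; exact: H. Qed.

Lemma upd_leW_fb w k : leW (upd w k false) (upd w k true).
Proof. move=> j; rewrite !ffunE; by case: (j == k). Qed.

Lemma Ik_dec k f : dec f -> dec (Ik k f).
Proof.
move=> df w w' H; rewrite /Ik; have := a01 k.
have := df _ _ (upd_leW (k:=k) (b:=true) H); have := df _ _ (upd_leW (k:=k) (b:=false) H); nra.
Qed.

Lemma Ik_mono k f g w : (forall w, f w <= g w) -> Ik k f w <= Ik k g w.
Proof. move=> H; rewrite /Ik; have := a01 k; have := H (upd w k true); have := H (upd w k false); nra. Qed.

Lemma Ik_cheb k f g w : dec f -> dec g -> Ik k f w * Ik k g w <= Ik k (fun w => f w * g w) w.
Proof.
move=> df dg; rewrite /Ik; have := a01 k.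
have := df _ _ (@upd_leW_fb w k); have := dg _ _ (@upd_leW_fb w k).
set f1 := f (upd w k true); set f0 := f (upd w k false).
set g1 := g (upd w k true); set g0 := g (upd w k false).
move=> h1 h2 [h3 h4].
have : 0 <= a k * (1 - a k) * ((f0 - f1) * (g0 - g1)).
  apply: Rmult_le_pos; first nra. nra.
nra.
Qed.

Lemma Il_dec l f : dec f -> dec (Il l f).
Proof. elim: l => //= k l IH df; exact: Ik_dec (IH df). Qed.

Lemma Il_mono l f g w : (forall w, f w <= g w) -> Il l f w <= Il l g w.
Proof. elim: l w => [|k l IH] w H //=; apply: Ik_mono => w'; exact: IH. Qed.

Lemma Il_cheb l f g w : dec f -> dec g -> Il l f w * Il l g w <= Il l (fun w => f w * g w) w.
Proof.
move=> df dg; elim: l w => [|k l IH] w /=; first lra.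
apply: Rle_trans (Ik_cheb _ _ (Il_dec l df) (Il_dec l dg)) _.
by apply: Ik_mono.
Qed.

Lemma harris f g : dec f -> dec g -> Ex f * Ex g <= Ex (fun w => f w * g w).
Proof.
move=> df dg; pose w0 : Om := [ffun => false].
rewrite !(Ex_eval _ w0); exact: Il_cheb.
Qed.

Lemma dec_prod (I : Type) (s : seq I) (P : pred I) (F : I -> Om -> R) :
  (forall i, dec (F i)) -> (forall i w, 0 <= F i w) ->
  dec (fun w => \big[Rmult/1]_(i <- s | P i) F i w) /\
  (forall w, 0 <= \big[Rmult/1]_(i <- s | P i) F i w).
Proof.
move=> dF F0; elim: s => [|i s [IH1 IH2]].
  by split=> [w w' _|w]; rewrite !big_nil; lra.
split=> [w w' H|w]; rewrite !big_cons; case: (P i) => //.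
  have := dF i _ _ H; have := IH1 _ _ H; have := IH2 w'; have := F0 i w'; nra.
  exact: IH1.
apply: Rmult_le_pos; [exact: F0 | exact: IH2].
Qed.

Lemma harris_prod (I : Type) (s : seq I) (P : pred I) (F : I -> Om -> R) :
  (forall i, dec (F i)) -> (forall i w, 0 <= F i w) ->
  \big[Rmult/1]_(i <- s | P i) Ex (F i) <= Ex (fun w => \big[Rmult/1]_(i <- s | P i) F i w).
Proof.
move=> dF F0; elim: s => [|i s IH].
  rewrite big_nil (Ex_ext (g := fun _ => 1)) ?Ex_const; [lra| by move=> w; rewrite big_nil].
rewrite big_cons.
have -> : Ex (fun w => \big[Rmult/1]_(j <- i :: s | P j) F j w) =
          Ex (fun w => if P i then F i w * \big[Rmult/1]_(j <- s | P j) F j w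
                       else \big[Rmult/1]_(j <- s | P j) F j w).
  by apply: Ex_ext => w; rewrite big_cons.
case: (P i) => //.
have [d1 d2] := dec_prod s P dF F0.
apply: Rle_trans (harris (dF i) d1).
apply: Rmult_le_compat_l => //; apply: Ex_ge0 => w; exact: F0.
Qed.

Lemma Ex_coin k c1 c0 : Ex (fun w => if w k then c1 else c0) = a k * c1 + (1 - a k) * c0.
Proof. by rewrite -(Ex_Ik k) /Ik (Ex_ext (g := fun _ => a k * c1 + (1 - a k) * c0)) ?Ex_const // => w; rewrite !upd_at. Qed.

Definition inv_at (k : K) (h : Om -> R) := forall w b, h (upd w k b) = h w.

Lemma Ex_indep k h : inv_at k h -> Ex (fun w => (if w k then 1 else 0) * h w) = a k * Ex h.
Proof.
move=> Hh; rewrite -(Ex_Ik k) -Ex_scale; apply: Ex_ext => w.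
by rewrite /Ik !upd_at !Hh; ring.
Qed.

Lemma Ex_indep2 k1 k2 h : k1 != k2 -> inv_at k1 h -> inv_at k2 h ->
  Ex (fun w => (if w k1 && w k2 then 1 else 0) * h w) = a k1 * a k2 * Ex h.
Proof.
move=> k12 H1 H2.
rewrite (Ex_ext (g := fun w => (if w k1 then 1 else 0) * ((if w k2 then 1 else 0) * h w))); last first.
  by move=> w; case: (w k1); case: (w k2) => /=; ring.
rewrite Ex_indep; last first.
  move=> w b; rewrite H1 upd_ne //; by rewrite eq_sym.
by rewrite Ex_indep // Rmult_assoc.
Qed.

End Prod.


Section Model.
Variables (N : nat) (p q delta : R).
Notation V := 'I_N.
Definition KK : finType := (('I_N + ('I_N * 'I_N)) + ('I_N * 'I_N))%type.
Definition aa (k : KK) : R :=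
  match k with inl (inl _) => p | inl (inr _) => irate q q | inr _ => delta end.
Notation Om := {ffun KK -> bool}.

Definition toOm (w : Om) : Omega N :=
  ([ffun i => w (inl (inl i))], [ffun ij => w (inl (inr ij))], [ffun ij => w (inr ij)]).
Definition fromOm (o : Omega N) : Om :=
  [ffun k : KK => match k with inl (inl i) => o.1.1 i | inl (inr ij) => o.1.2 ij | inr ij => o.2 ij end].

Lemma toOmK : cancel toOm fromOm.
Proof. move=> w; apply/ffunP => -[[i|ij]|ij]; by rewrite !ffunE. Qed.
Lemma fromOmK : cancel fromOm toOm.
Proof.
move=> [[f1 f2] f3]; rewrite /toOm /=.
by congr (_, _, _); apply/ffunP => x; rewrite !ffunE.
Qed.

Lemma weight_toOm w : weight p q delta (toOm w) = Wt aa w.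
Proof.
rewrite /weight /Wt big_sumType big_sumType /=.
by congr (_ * _ * _); apply: eq_bigr => x _; rewrite ffunE.
Qed.

Lemma Prob_Ex (E : Omega N -> Prop) :
  Prob p q delta E =
  Ex aa (fun w => if excluded_middle_informative (E (toOm w)) then 1 else 0).
Proof.
rewrite /Prob /Ex (reindex toOm) /=; last first.
  by exists fromOm => x _; [apply: toOmK | apply: fromOmK].
apply: eq_bigr => w _; rewrite weight_toOm.
case: excluded_middle_informative => HH /=; ring.
Qed.


Definition dr (w : Om) (i j : V) : bool := (i != j) && w (inl (inr (i, j))).
Definition idr (w : Om) (i j : V) : bool := dr w i j && w (inr (i, j)).

Fixpoint Rs (w : Om) (k : nat) (U : {set V}) (v : V) : {set V} :=
  if k is k'.+1 then v |: \bigcup_(m in U :\ v | idr w v m) Rs w k' (U :\ v) m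
  else [set v].

Definition Jset (w : Om) k U v : {set V} := [set j | [exists m in Rs w k U v, dr w m j]].
Definition Dset (w : Om) v : {set V} := [set j | dr w v j].

Lemma ld_toOm w i j : learns_direct (toOm w) i j = dr w i j.
Proof. by rewrite /learns_direct /dr /toOm /= ffunE. Qed.
Lemma li_toOm w i j : learns_indirect (toOm w) i j = idr w i j.
Proof. by rewrite /learns_indirect /idr ld_toOm /toOm /= ffunE. Qed.

Lemma Rs_root w k U v : v \in Rs w k U v.
Proof. by case: k => [|k] /=; rewrite ?set11 ?setU11. Qed.

Lemma reach_path w (x : V) (s : seq V) : forall (U : {set V}) k,
  uniq (x :: s) -> path (ind_edge (toOm w)) x s -> {subset x :: s <= U} ->
  (size s <= k)%nat -> x \in Rs w k U (last x s).
Proof.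
elim/last_ind: s => [|s y IH] U k.
  by move=> _ _ _ _; rewrite /= Rs_root.
rewrite -rcons_cons rcons_uniq rcons_path last_rcons size_rcons => /andP[yn us] /andP[ps e] sub.
case: k => [|k] //= sk.
apply/setU1P; right; apply/bigcupP; exists (last x s).
  rewrite !inE; apply/andP; split; last first.
    by move: e; rewrite /ind_edge li_toOm.
  apply/andP; split.
    by apply/eqP => E; move: yn; rewrite -E mem_last.
  by apply: sub; rewrite mem_rcons in_cons mem_last orbT.
apply: IH => //.
move=> z zs; rewrite !inE; apply/andP; split.
  by apply/eqP => E; move: yn; rewrite -E zs.
by apply: sub; rewrite mem_rcons in_cons zs orbT.
Qed.

Lemma reach w m i : connect (ind_edge (toOm w)) m i -> m \in Rs w N setT i.
Proof.
move=> /connectP [s ps ->].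
case: (shortenP ps) => s' ps' us' _.
have cs : #|m :: s'| = size (m :: s') by apply/card_uniqP.
have := max_card (mem (m :: s')); rewrite cs card_ord /= => H.
apply: reach_path => //; last by apply: ltnW.
by move=> z _; rewrite inE.
Qed.

Lemma Iset_sub w i : Iset (toOm w) i \subset Jset w N setT i.
Proof.
apply/subsetP => j; rewrite !inE => /andP[_ /existsP [m /andP[cm dm]]].
apply/existsP; exists m; rewrite reach //=.
by rewrite -ld_toOm.
Qed.

Lemma dr_mono w w' i j : leW w w' -> dr w i j -> dr w' i j.
Proof. by rewrite /dr => H /andP[-> /H]. Qed.
Lemma idr_mono w w' i j : leW w w' -> idr w i j -> idr w' i j.
Proof. by rewrite /idr => H /andP[/(dr_mono H) -> /H]. Qed.

Lemma Rs_mono (w w' : Om) k (U : {set V}) v : leW w w' -> Rs w k U v \subset Rs w' k U v.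
Proof.
move=> H; elim: k U v => [|k IH] U v //=.
apply/subsetP => x /setU1P [->|/bigcupP [m /andP [mU im] xm]]; first exact: setU11.
apply/setU1P; right; apply/bigcupP; exists m; first by rewrite mU (idr_mono H).
exact: (subsetP (IH _ _)).
Qed.

Lemma Jset_mono (w w' : Om) k (U : {set V}) v : leW w w' -> Jset w k U v \subset Jset w' k U v.
Proof.
move=> H; apply/subsetP => j; rewrite !inE => /existsP [m /andP [mR dm]].
apply/existsP; exists m; rewrite (subsetP (Rs_mono k U v H)) //=.
exact: dr_mono dm.
Qed.

Definition agreeU (U : {set V}) (w w' : Om) := forall x y, x \in U ->
  w (inl (inr (x, y))) = w' (inl (inr (x, y))) /\ w (inr (x, y)) = w' (inr (x, y)).

Lemma agree_dr U w w' x y : agreeU U w w' -> x \in U -> dr w x y = dr w' x y.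
Proof. by move=> H xU; rewrite /dr (H x y xU).1. Qed.
Lemma agree_idr U w w' x y : agreeU U w w' -> x \in U -> idr w x y = idr w' x y.
Proof. by move=> H xU; rewrite /idr (agree_dr y H xU) (H x y xU).2. Qed.

Lemma agree_sub (U U' : {set V}) w w' : U' \subset U -> agreeU U w w' -> agreeU U' w w'.
Proof. by move=> sU H x y xU; apply: H; apply: (subsetP sU). Qed.

Lemma Rs_agree (w w' : Om) k (U : {set V}) (v : V) : v \in U -> agreeU U w w' -> Rs w k U v = Rs w' k U v.
Proof.
elim: k U v => [|k IH] U v vU H //=.
congr (_ |: _); apply: eq_big => m.
  by rewrite (agree_idr m H vU).
rewrite andbC => /andP [_ mU]; apply: IH => //.
by apply: agree_sub H; apply: subD1set.
Qed.

Lemma Rs_sub (w : Om) k (U : {set V}) (v : V) : v \in U -> Rs w k U v \subset U.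
Proof.
elim: k U v => [|k IH] U v vU /=; first by rewrite sub1set.
apply/subsetP => x /setU1P [->|/bigcupP [m /andP [mU _] xm]] //.
have := subsetP (IH _ _ mU) x xm; rewrite inE => /andP [_ ->] //.
Qed.

Lemma Jset_agree (w w' : Om) k (U : {set V}) (v : V) : v \in U -> agreeU U w w' -> Jset w k U v = Jset w' k U v.
Proof.
move=> vU H; apply/setP => j; rewrite !inE (Rs_agree k vU H).
apply: eq_existsb => m; case mR: (m \in Rs w' k U v) => //=.
apply: agree_dr H _; apply: (subsetP (Rs_sub w' k vU)) mR.
Qed.

Lemma Jset_rec (w : Om) k (U : {set V}) (v : V) : Jset w k.+1 U v \subset
  Dset w v :|: \bigcup_(m in U :\ v | idr w v m) Jset w k (U :\ v) m.
Proof.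
apply/subsetP => j; rewrite !inE => /existsP [m' /andP [/setU1P [->|/bigcupP [m mP m'R]] dm]].
  by rewrite dm.
by apply/orP; right; apply/bigcupP; exists m => //; rewrite inE; apply/existsP; exists m'; rewrite m'R.
Qed.

End Model.


Lemma pow_le_dec (x : R) (m n : nat) : 0 <= x <= 1 -> (m <= n)%nat -> x ^ n <= x ^ m.
Proof.
move=> hx /leP; elim: n => [|n IH] H.
  have -> : m = 0%nat by lia. lra.
case: (Nat.eq_dec m n.+1) => [->|ne]; first lra.
have := IH ltac:(lia); rewrite /= => h.
have := pow_le x n ltac:(lra); nra.
Qed.

Lemma pow_sum (x : R) (I : Type) (s : seq I) (P : pred I) (c : I -> nat) :
  x ^ (\sum_(i <- s | P i) c i) = \big[Rmult/1]_(i <- s | P i) x ^ (c i).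
Proof. by rewrite (big_morph (pow x) (fun a b => pow_add x a b) (pow_O x)). Qed.

Lemma card_set_sum (T : finType) (P : pred T) : #|[set j | P j]| = \sum_(j | P j) 1.
Proof. by rewrite -sum1_card; apply: eq_bigl => j; rewrite inE. Qed.

Lemma card_bigcup_le (T : finType) (I : Type) (s : seq I) (P : pred I) (F : I -> {set T}) :
  (#|\bigcup_(i <- s | P i) F i| <= \sum_(i <- s | P i) #|F i|)%nat.
Proof.
elim/big_ind2: _ => //; first by rewrite cards0.
move=> n A m B hA hB; apply: leq_trans (leq_card_setU A B).1 _; exact: leq_add.
Qed.

Section Bound.
Variables (N : nat) (p q delta x psi : R).
Hypotheses (hp : 0 <= p <= 1) (hq : 0 <= q <= 1) (hdelta : 0 <= delta <= 1).
Hypotheses (hx : 0 <= x <= 1) (hpsi : 0 <= psi <= 1).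
Notation V := 'I_N.
Notation a := (@aa N p q delta).
Notation Om := {ffun KK N -> bool}.
Definition ss := irate q q.
Definition rr := ss * delta.
Definition dd := \big[Rmult/1]_(j : V) (1 - ss * (1 - x)).
Hypotheses (Hd : psi <= dd) (Hstep : psi <= dd * \big[Rmult/1]_(j : V) (1 - rr * (1 - psi))).

Lemma hs : 0 <= ss <= 1.
Proof. rewrite /ss /irate; nra. Qed.
Lemma hr : 0 <= rr <= 1.
Proof. have := hs; rewrite /rr; nra. Qed.

Lemma a01 : forall k, 0 <= a k <= 1.
Proof. have := hs; rewrite /ss => h [[i|ij]|ij] /=; lra. Qed.

Lemma xpow01 n : 0 <= x ^ n <= 1.
Proof.
split; first by apply: pow_le; lra.
have := @pow_le_dec x 0 n hx (leq0n n); rewrite /=; lra.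
Qed.

Lemma Jset0 (w : Om) (U : {set V}) v : Jset w 0 U v = Dset w v.
Proof.
apply/setP => j; rewrite !inE /=; apply/existsP/idP => [[m /andP [/set1P -> h]]|h] //.
by exists v; rewrite set11.
Qed.

Lemma dec_xJ k (U : {set V}) v : dec (fun w : Om => x ^ #|Jset w k U v|).
Proof. move=> w w' H; apply: pow_le_dec => //; apply: subset_leq_card; exact: Jset_mono. Qed.

Lemma dec_xD v : dec (fun w : Om => x ^ #|Dset w v|).
Proof.
move=> w w' H; apply: pow_le_dec => //; apply: subset_leq_card.
apply/subsetP => j; rewrite !inE; exact: dr_mono.
Qed.

Lemma ExD v : dd <= Ex a (fun w => x ^ #|Dset w v|).
Proof.
have E : forall w : Om, x ^ #|Dset w v| = \big[Rmult/1]_(j : V) (if dr w v j then x else 1).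
  move=> w; rewrite /Dset card_set_sum pow_sum big_mkcond; apply: eq_bigr => j _.
  by case: (dr w v j) => //=; ring.
rewrite (Ex_ext _ E).
apply: Rle_trans (harris_prod a01 _ _ _ _); last first.
- by move=> j w; case: (dr w v j); lra.
- move=> j w w' H; case E1 : (dr w v j); case E2 : (dr w' v j); try lra.
  by have := @dr_mono _ w w' v j H; rewrite E1 E2 => /(_ erefl).
rewrite /dd; apply: prodR_le => j _; have := hs; split; first nra.
case: (eqVneq v j) => [->|vj].
  rewrite (Ex_ext a (g := fun _ => 1)) ?Ex_const; first nra.
  by move=> w; rewrite /dr eqxx.
rewrite (Ex_ext a (g := fun w => if w (inl (inr (v, j))) then x else 1)); last first.
  by move=> w; rewrite /dr vj.
rewrite Ex_coin /=; rewrite /ss; lra.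
Qed.

Lemma inv_Jset k (U : {set V}) m v0 m0 (c : KK N) : m \in U -> v0 \notin U ->
  (c = inl (inr (v0, m0)) \/ c = inr (v0, m0)) ->
  inv_at c (fun w : Om => 1 + -1 * x ^ #|Jset w k U m|).
Proof.
move=> mU v0U hc w b; rewrite (Jset_agree (w' := w) k mU) // => x' y x'U.
have nx : x' != v0 by apply/eqP => E; move: v0U; rewrite -E x'U.
by case: hc => ->; rewrite !upd_ne //; apply/eqP; case=> E _; move: nx; rewrite E eqxx.
Qed.

Lemma Gbound k : forall (U : {set V}) v, v \in U ->
  psi <= Ex a (fun w => x ^ #|Jset w k U v|).
Proof.
elim: k => [|k IH] U v vU.
  rewrite (Ex_ext a (g := fun w => x ^ #|Dset w v|)); first exact: Rle_trans Hd (ExD v).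
  by move=> w; rewrite Jset0.
pose Fm m (w : Om) := if idr w v m then x ^ #|Jset w k (U :\ v) m| else 1.
have pw : forall w, x ^ #|Dset w v| * \big[Rmult/1]_(m in U :\ v) Fm m w
                    <= x ^ #|Jset w k.+1 U v|.
  move=> w.
  have c1 := subset_leq_card (Jset_rec w k U v).
  have c2 := (leq_card_setU (Dset w v) (\bigcup_(m in U :\ v | idr w v m) Jset w k (U :\ v) m)).1.
  have c3 := card_bigcup_le (index_enum V) (fun m => (m \in U :\ v) && idr w v m)
               (fun m => Jset w k (U :\ v) m).
  have : (#|Jset w k.+1 U v| <= #|Dset w v| +
            \sum_(m in U :\ v | idr w v m) #|Jset w k (U :\ v) m|)%nat.
    apply: leq_trans c1 _; apply: leq_trans c2 _; rewrite leq_add2l; exact: c3.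
  by move=> /(pow_le_dec hx); rewrite pow_add pow_sum big_mkcondr.
have Fm01 : forall m w, 0 <= Fm m w.
  by move=> m w; rewrite /Fm; case: (idr w v m); [have := xpow01 #|Jset w k (U :\ v) m|; lra | lra].
have Fmdec : forall m, dec (Fm m).
  move=> m w w' H; rewrite /Fm.
  case E1 : (idr w v m); case E2 : (idr w' v m).
  - exact: dec_xJ.
  - by have := @idr_mono _ w w' v m H; rewrite E1 E2 => /(_ erefl).
  - have := xpow01 #|Jset w' k (U :\ v) m|; lra.
  - lra.
have [dP P0] := dec_prod (index_enum V) (fun m => m \in U :\ v) Fmdec Fm01.
apply: Rle_trans (Ex_le a01 pw).
apply: Rle_trans (harris a01 (dec_xD v) dP).
have hd0 : 0 <= dd by rewrite /dd; apply: prodR_ge0 => j _; have := hs; nra.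
have hEFm : forall m, m \in U :\ v ->
    Ex a (Fm m) = 1 - rr * (1 - Ex a (fun w => x ^ #|Jset w k (U :\ v) m|)).
  move=> m mU; have vm : v != m by move: mU; rewrite !inE eq_sym => /andP[].
  have vU' : v \notin U :\ v by rewrite !inE eqxx.
  rewrite (Ex_ext a (g := fun w => 1 + -1 * ((if w (inl (inr (v, m))) && w (inr (v, m)) then 1 else 0)
                     * (1 + -1 * x ^ #|Jset w k (U :\ v) m|)))); last first.
    move=> w; rewrite /Fm /idr /dr vm /=.
    by case: (w (inl (inr (v, m)))); case: (w (inr (v, m))) => /=; ring.
  rewrite Ex_add Ex_const Ex_scale Ex_indep2 //; last first.
  - exact: (inv_Jset (m0 := m) k mU vU' (or_intror erefl)).
  - exact: (inv_Jset (m0 := m) k mU vU' (or_introl erefl)).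
  rewrite Ex_add Ex_const Ex_scale /= /rr /ss; ring.
have hprod : \big[Rmult/1]_(j : V) (1 - rr * (1 - psi)) <=
             \big[Rmult/1]_(m in U :\ v) Ex a (Fm m).
  rewrite [in X in _ <= X]big_mkcond; apply: prodR_le => m _; have := hr.
  case mU : (m \in U :\ v); last by nra.
  rewrite hEFm //; have := IH (U :\ v) m mU; nra.
have hE0 : 0 <= \big[Rmult/1]_(j : V) (1 - rr * (1 - psi)).
  by apply: prodR_ge0 => j _; have := hr; nra.
apply: Rle_trans Hstep _.
apply: Rmult_le_compat => //.
  exact: ExD.
apply: Rle_trans hprod (harris_prod a01 _ _ Fmdec Fm01).
Qed.


Lemma Pbound (M : nat) (i : V) :
  (1 - x ^ M) * Ex a (fun w => if (M < #|Jset w N setT i|)%nat then 1 else 0) <= 1 - psi.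
Proof.
have G : psi <= Ex a (fun w => x ^ #|Jset w N [set: V] i|) := Gbound N (in_setT i).
have : Ex a (fun w => (1 - x ^ M) * (if (M < #|Jset w N setT i|)%nat then 1 else 0))
       <= Ex a (fun w => 1 + -1 * x ^ #|Jset w N setT i|).
  apply: (Ex_le a01) => w.
  have := xpow01 #|Jset w N setT i|; have := xpow01 M.
  case: ifP => h; last by lra.
  have := pow_le_dec hx (ltnW h); lra.
rewrite Ex_add Ex_const -(Ex_scale a (1 - x ^ M)) (Ex_scale a (-1)) => H; lra.
Qed.

Lemma final_bound (M : nat) (i : V) (om : R) : INR M <= om ->
  (1 - x ^ M) * Prob p q delta (fun w : Omega N => om < INR #|Iset w i|) <= 1 - psi.
Proof.
move=> hM; apply: Rle_trans (Pbound M i).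
have h0 : 0 <= 1 - x ^ M by have := xpow01 M; lra.
apply: Rmult_le_compat_l => //.
rewrite Prob_Ex; apply: (Ex_le a01) => w.
case: excluded_middle_informative => h /=; case: ifP => h2; try lra.
exfalso.
have h3 := subset_leq_card (Iset_sub w i).
have : (#|Iset (toOm w) i| <= M)%nat by apply: leq_trans h3 _; rewrite leqNgt h2.
move/leP/le_INR; lra.
Qed.

End Bound.


Lemma prod_const N (c : R) : \big[Rmult/1]_(j < N) c = c ^ N.
Proof.
rewrite big_const card_ord; elim: N => [|N IH] //=; by rewrite IH.
Qed.

Lemma bern1 n (y : R) : 0 <= y <= 1 -> 1 - INR n * y <= (1 - y) ^ n.
Proof.
move=> hy; elim: n => [|n IH]; first by rewrite /=; lra.
rewrite [(1 - y) ^ n.+1]/= S_INR; have := pos_INR n; nra.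
Qed.

Lemma cubic_nonneg n : 0 <= INR n * (INR n - 1) * (INR n - 2).
Proof.
case: n => [|[|n]]; first by rewrite /=; lra.
  by rewrite /=; lra.
rewrite !S_INR; have := pos_INR n; nra.
Qed.

Lemma bern3 n (y : R) : 0 <= y <= 1 ->
  1 - INR n * y + INR n * (INR n - 1) / 2 * y ^ 2
    - INR n * (INR n - 1) * (INR n - 2) / 6 * y ^ 3 <= (1 - y) ^ n.
Proof.
move=> hy; elim: n => [|n IH]; first by rewrite /=; lra.
rewrite [(1 - y) ^ n.+1]/= S_INR.
have c := cubic_nonneg n.
have y4 : 0 <= y ^ 4 by apply: pow_le; lra.
have : (1 - y) * (1 - INR n * y + INR n * (INR n - 1) / 2 * y ^ 2
    - INR n * (INR n - 1) * (INR n - 2) / 6 * y ^ 3) <= (1 - y) * (1 - y) ^ n.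
  apply: Rmult_le_compat_l; lra.
have E : (1 - y) * (1 - INR n * y + INR n * (INR n - 1) / 2 * y ^ 2
    - INR n * (INR n - 1) * (INR n - 2) / 6 * y ^ 3) =
  1 - (INR n + 1) * y + (INR n + 1) * (INR n + 1 - 1) / 2 * y ^ 2 -
  (INR n + 1) * (INR n + 1 - 1) * (INR n + 1 - 2) / 6 * y ^ 3
  + INR n * (INR n - 1) * (INR n - 2) / 6 * y ^ 4 by field.
rewrite E.
have : 0 <= INR n * (INR n - 1) * (INR n - 2) / 6 * y ^ 4.
  apply: Rmult_le_pos => //; lra.
lra.
Qed.

Lemma cube_le n : INR n * (INR n - 1) * (INR n - 2) <= INR n ^ 3.
Proof.
case: n => [|[|n]]; first by rewrite /=; lra.
  by rewrite /=; lra.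
rewrite !S_INR; have := pos_INR n; nra.
Qed.

Lemma key_ineq (A r u : R) : 0 < u <= 1/4 -> Rabs (A - 1) <= u / 16 -> 0 <= r <= u / 16 ->
  1 - u <= 1 - A * u + (A * A - A * r) / 2 * u ^ 2 - A ^ 3 / 6 * u ^ 3 - A * u ^ 2 / 64.
Proof.
move=> hu hA hr.
have [hA1 hA2] : 1 - u / 16 <= A <= 1 + u / 16 by split_Rabs; lra.
set t := A - 1.
have ht : - u / 16 <= t <= u / 16 by rewrite /t; lra.
have hA' : A = 1 + t by rewrite /t; ring.
rewrite hA'.
have ht1 : -1/64 <= t <= 1/64 by lra.
have h2 : ((1 + t) * (1 + t) - (1 + t) * r) / 2 >= 0.45 by nra.
have h13 : (1 + t) ^ 3 <= 1.1.
  have e : (1 + t) ^ 3 = (1 + t) * (1 + t) * (1 + t) by ring.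
  rewrite e; nra.
have h3 : (1 + t) ^ 3 / 6 * u <= 0.05 by nra.
have h4 : (1 + t) / 64 <= 0.02 by lra.
set B := ((1 + t) * (1 + t) - (1 + t) * r) / 2 - (1 + t) ^ 3 / 6 * u - (1 + t) / 64.
have hB : B >= 0.38 by rewrite /B; lra.
have E : 1 - (1 + t) * u + ((1 + t) * (1 + t) - (1 + t) * r) / 2 * u ^ 2 -
   (1 + t) ^ 3 / 6 * u ^ 3 - (1 + t) * u ^ 2 / 64 = 1 - u - t * u + B * u * u.
  rewrite /B; field.
rewrite E.
have : t * u <= u / 16 * u by apply: Rmult_le_compat_r; lra.
nra.
Qed.

Lemma params_ok N q delta u : 0 < delta <= 1 -> 0 <= q <= 1 -> 0 < u <= 1/4 ->
  Rabs (delta * (q * q) * INR N - 1) <= u / 16 -> delta * (q * q) <= u / 16 ->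
  (1 - u) <= dd N q (1 - delta * u ^ 2 / 64) /\
  (1 - u) <= dd N q (1 - delta * u ^ 2 / 64) *
             \big[Rmult/1]_(j < N) (1 - rr q delta * (1 - (1 - u))).
Proof.
move=> hd hq hu hA hr.
set A := delta * (q * q) * INR N.
have [hA1 hA2'] : 1 - u / 16 <= A <= 1 + u / 16.
  by rewrite /A; move: hA; split_Rabs; lra.
have hA2 : A <= 2 by lra.
have hAabs : Rabs (A - 1) <= u / 16 by exact: hA.
have hA0 : 0 <= A.
  rewrite /A; have := pos_INR N; have : 0 <= q * q by nra.
  move=> h1 h2; apply: Rmult_le_pos => //; nra.
have hs : 0 <= q * q <= 1 by nra.
set y := q * q * (delta * u ^ 2 / 64).
have hy : 0 <= y <= 1.
  rewrite /y; have : 0 <= u ^ 2 <= 1 by split; [apply: pow_le; lra | simpl; nra].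
  move=> h; have h0 : 0 <= delta * u ^ 2 / 64 <= 1 by split; nra.
  split; nra.
have Edd : dd N q (1 - delta * u ^ 2 / 64) = (1 - y) ^ N.
  rewrite /dd prod_const /ss /irate /y; congr (_ ^ _); ring.
have hNy : INR N * y = A * u ^ 2 / 64 by rewrite /y /A; field.
have hu2 : A * u ^ 2 / 64 <= u by rewrite /=; nra.
have hdd : 1 - A * u ^ 2 / 64 <= dd N q (1 - delta * u ^ 2 / 64).
  rewrite Edd -hNy; exact: bern1.
split; first lra.
rewrite prod_const /rr /ss /irate.
set r := q * q * delta.
have hr0 : 0 <= r <= u / 16 by rewrite /r; split; nra.
have hru : 0 <= r * (1 - (1 - u)) <= 1 by split; nra.
set P := (1 - r * (1 - (1 - u))) ^ N.
have hP : 0 <= P <= 1.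
  rewrite /P; split; first by apply: pow_le; lra.
  have := @pow_le_dec (1 - r * (1 - (1 - u))) 0 N ltac:(lra) (leq0n N); rewrite /=; lra.
have hQ := bern3 N hru.
have hNr : INR N * r = A by rewrite /A /r; ring.
have hc := cube_le N.
have hr3 : 0 <= (r * u) ^ 3 by apply: pow_le; nra.
have hQ' : 1 - A * u + (A * A - A * r) / 2 * u ^ 2 - A ^ 3 / 6 * u ^ 3 <= P.
  apply: Rle_trans hQ; rewrite (_ : 1 - (1 - u) = u); last ring.
  have e1 : INR N * (r * u) = A * u by rewrite -hNr; ring.
  have e2 : INR N * (INR N - 1) / 2 * (r * u) ^ 2 = (A * A - A * r) / 2 * u ^ 2.
    by rewrite -hNr; field.
  have e3 : INR N ^ 3 / 6 * (r * u) ^ 3 = A ^ 3 / 6 * u ^ 3 by rewrite -hNr; field.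
  rewrite e1 e2.
  have : INR N * (INR N - 1) * (INR N - 2) / 6 * (r * u) ^ 3 <= INR N ^ 3 / 6 * (r * u) ^ 3.
    apply: Rmult_le_compat_r => //; lra.
  lra.
have hk := key_ineq hu hAabs hr0.
have : (1 - A * u ^ 2 / 64) * P <= dd N q (1 - delta * u ^ 2 / 64) * P.
  apply: Rmult_le_compat_r; lra.
have : P - A * u ^ 2 / 64 <= (1 - A * u ^ 2 / 64) * P.
  have hu3 : 0 <= u ^ 2 by apply: pow_le; lra.
  have : 0 <= A * u ^ 2 / 64 by nra.
  nra.
lra.
Qed.

Local Close Scope R_scope.
Unset Implicit Arguments.

Theorem mainTheorem14 (delta : R) (p q : nat -> R) (omega : nat -> R)
  (fi : forall n : nat, 'I_(n.+2)) :
  (0 < delta <= 1)%R ->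
  (forall n : nat, (2 <= n)%N -> (0 < p n < 1)%R /\ (0 <= q n <= 1)%R) ->
  Un_cv (fun n : nat => (delta * irate (q n) (q n) * INR n)%R) 1%R ->
  cv_infty omega ->
  Un_cv (fun n : nat =>
           Prob (p n.+2) (q n.+2) delta
                (fun w : Omega n.+2 => (omega n.+2 < INR #|Iset w (fi n)|)%R))
        0%R.
Proof.
Local Open Scope R_scope.
move=> hdelta hpq hcrit hom eps heps.
pose u := Rmin (eps / 4) (1 / 4).
have hu : 0 < u <= 1 / 4.
  rewrite /u; split; [apply: Rmin_glb_lt; lra | apply: Rmin_r].
have hue : u <= eps / 4 by apply: Rmin_l.
pose x := 1 - delta * u ^ 2 / 64.
have hu2 : 0 < u ^ 2 <= 1 by rewrite /=; split; nra.
have hx : 0 <= x < 1 by rewrite /x; split; nra.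
have [M hM] := pow_lt_1_zero x ltac:(rewrite Rabs_right; lra) (1 / 2) ltac:(lra).
have hxM : x ^ M < 1 / 2.
  have := hM M (le_n M); rewrite Rabs_right //; apply: Rle_ge; apply: pow_le; lra.
have hxM0 : 0 <= x ^ M by apply: pow_le; lra.
have [N1 hN1] := hcrit (u / 16) ltac:(lra).
have [N2 [hN2 hN2']] := archimed_cor1 (u / 32) ltac:(lra).
have [N3 hN3] := hom (INR M).
exists (Nat.add (Nat.add N1 N2) N3) => n hn.
pose m := n.+2.
have [[hp1 hp2] hq] := hpq m erefl.
have hmN1 : (m >= N1)%coq_nat by rewrite /m; lia.
have hmN3 : (N3 <= m)%coq_nat by rewrite /m; lia.
have hA := hN1 m hmN1; rewrite /R_dist /irate in hA.
have hm0 : 0 < INR N2 by apply: lt_0_INR.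
have hmm : INR N2 <= INR m by apply: le_INR; rewrite /m; lia.
have hr : delta * (q m * q m) <= u / 16.
  have [hA1 hA2] : 1 - u / 16 <= delta * (q m * q m) * INR m <= 1 + u / 16.
    by move: hA; split_Rabs; lra.
  have hinv : / INR m <= / INR N2 by apply: Rinv_le_contravar.
  have hm0' : 0 < INR m by lra.
  have e : delta * (q m * q m) = (delta * (q m * q m) * INR m) * / INR m by field; lra.
  rewrite e.
  have hi0 : 0 < / INR m by apply: Rinv_0_lt_compat.
  have : (delta * (q m * q m) * INR m) * / INR m <= 2 * / INR m by apply: Rmult_le_compat_r; lra.
  lra.
have hA' : Rabs (delta * (q m * q m) * INR m - 1) <= u / 16 by lra.
have [Hd Hstep] := params_ok hdelta hq hu hA' hr.
have hp : 0 <= p m <= 1 by lra.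
have hdl : 0 <= delta <= 1 by lra.
have hpsi : 0 <= 1 - u <= 1 by lra.
have hx' : 0 <= x <= 1 by lra.
have hom' : INR M <= omega m by apply: Rlt_le; apply: hN3.
have Hf := final_bound hp hq hdl hx' hpsi Hd Hstep (fi n) hom'.
have hP0 : 0 <= Prob (p m) (q m) delta (fun w : Omega m => omega m < INR #|Iset w (fi n)|).
  rewrite Prob_Ex; apply: Ex_ge0 => [|w]; first exact: (a01 hp hq hdl hpsi).
  by case: excluded_middle_informative => _ /=; lra.
suff : Rdist (Prob (p m) (q m) delta (fun w : Omega m => omega m < INR #|Iset w (fi n)|)) 0 < eps by [].
rewrite /Rdist Rminus_0_r Rabs_right; last lra.
nra.
Qed.
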